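(* In the oracle setting below with $K=3$ populations (sizes $n_1,n_2,n_3$, $n=n_1+n_2+n_3$), run Algorithm BS* on $\mathcal D$, and consider the conditions (A1) $(n_2-n_1)d(\widehat P_1,\widehat P_2)+n_3\{d(\widehat P_1,\widehat P_3)-d(\widehat P_2,\widehat P_3)\}\ge 0$; (A2) $(n_3-n_1)d(\widehat P_1,\widehat P_3)+n_2\{d(\widehat P_1,\widehat P_2)-d(\widehat P_2,\widehat P_3)\}\ge 0$; (A3) $n_1(n_2+n_3-1)\{d(\widehat P_1,\widehat P_3)-d(\widehat P_1,\widehat P_2)\}+(n_3-n_2)(n_1+1)d(\widehat P_2,\widehat P_3)\ge 0$. Then: (a) In the first iteration, transferring an observation from population 1 maximizes $d_w^*(C_1^{(1)},C_2^{(1)})$ if and only if (A1) and (A2) both hold. Furthermore, if (A1) and (A2) hold (and the first transferred observation is from population 1), then in each of the first $n_1$ iterations an observation from population 1 is transferred to $C_1$, and $d_w^*(C_1^{(r)},C_2^{(r)})$ is increasing in $r$ for $r=1,\dots,n_1$. (b) Under (A1) and (A2) (with the first $n_1$ iterations transferring the observations of population 1), transferring an observation from population 2 at iteration $n_1+1$ maximizes $d_w^*(C_1^{(n_1+1)},C_2^{(n_1+1)})$ if and only if (A3) holds. Furthermore, if (A1), (A2), (A3) hold, observations from population 2 are transferred to $C_1$ at iterations $n_1+1,\dots,n_1+n_2$, and $r\mapsto d_w^*(C_1^{(r)},C_2^{(r)})$ is convex on $\{n_1,\dots,n_1+n_2\}$. (c) Under (A1), (A2), (A3), $r\mapsto d_w^*(C_1^{(r)},C_2^{(r)})$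 is decreasing for $r\ge n_1+n_2$.
   Context: Let $k$ be a characteristic kernel on a separable metric space $\mathcal X$ and, for Borel probability measures $P,Q$, $d(P,Q)=\iint k\,dP\,dP+\iint k\,dQ\,dQ-2\iint k\,dP\,dQ$ (squared MMD). Oracle setting: $\mathcal D=\mathcal D_1\cup\dots\cup\mathcal D_K$ (disjoint), $\mathcal D_i$ the $n_i$ observations from population $i$, $\widehat P_i$ the empirical distribution of $\mathcal D_i$, the $\widehat P_i$ being pairwise distinct. For nonempty $S\subseteq\mathcal D$ with $m_i=|S\cap\mathcal D_i|$, $\widetilde P_S=\sum_i\frac{m_i}{|S|}\widehat P_i$; for disjoint nonempty $S_1,S_2$, $d_w^*(S_1,S_2)=\frac{|S_1||S_2|}{|S_1|+|S_2|}d(\widetilde P_{S_1},\widetilde P_{S_2})$. Algorithm BS* on $\mathcal E$: $C_1^{(0)}=\emptyset$, $C_2^{(0)}=\mathcal E$; for $r=1,\dots,|\mathcal E|-1$ choose $c\in C_2^{(r-1)}$ maximizing $d_w^*(C_1^{(r-1)}\cup\{c\},C_2^{(r-1)}\setminus\{c\})$ and set $C_1^{(r)}=C_1^{(r-1)}\cup\{c\}$, $C_2^{(r)}=C_2^{(r-1)}\setminus\{c\}$. ''An observation from population $i$ is transferred at iteration $r$'' means the chosen $c$ lies in $\mathcal D_i$. *)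

(* Defs.v *)
From HB Require Import structures.
From mathcomp Require Import all_boot all_order all_algebra.
Set Implicit Arguments. Unset Strict Implicit. Unset Printing Implicit Defensive.
Import Order.TTheory GRing.Theory Num.Theory.
Local Open Scope ring_scope.

(* k is a (symmetric, positive semidefinite) kernel on X which is
   characteristic on finitely supported probability measures: distinct
   finitely supported measures have positive squared MMD. *)
Definition kernel_quad (R : realFieldType) (X : Type) (k : X -> X -> R)
  (N : nat) (y : 'I_N -> X) (c : 'I_N -> R) : R :=
  \sum_(i < N) \sum_(j < N) c i * c j * k (y i) (y j).

Definition char_kernel_fin (R : realFieldType) (X : Type) (k : X -> X -> R) : Prop :=
  [/\ (forall u v, k u v = k v u),
      (forall N (y : 'I_N -> X) (c : 'I_N -> R), 0 <= kernel_quad k y c) &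
      (forall N (y : 'I_N -> X) (c : 'I_N -> R), injective y ->
          \sum_(i < N) c i = 0 -> (exists i, c i != 0) -> 0 < kernel_quad k y c)].

(* The data set D is indexed by a finite type I; observation i has value
   x i : X and belongs to population pop i : 'I_3 (0,1,2 stand for 1,2,3).
   A finitely supported measure sum_i p i * delta_(x i) is represented by its
   weight function p : I -> R. *)

Definition mmd2 (R : realFieldType) (X : Type) (k : X -> X -> R)
  (I : finType) (x : I -> X) (p q : I -> R) : R :=
  \sum_i \sum_j p i * p j * k (x i) (x j)
  + \sum_i \sum_j q i * q j * k (x i) (x j)
  - 2 * \sum_i \sum_j p i * q j * k (x i) (x j).

Definition popset (I : finType) (pop : I -> 'I_3) (a : 'I_3) : {set I} :=
  [set i | pop i == a].

Definition popsize (I : finType) (pop : I -> 'I_3) (a : 'I_3) : nat :=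
  #|popset pop a|.

Definition emp (R : realFieldType) (I : finType) (pop : I -> 'I_3) (a : 'I_3)
  (i : I) : R :=
  (pop i == a)%:R / (popsize pop a)%:R.

Definition emp_mass (R : realFieldType) (X : eqType) (I : finType) (x : I -> X)
  (pop : I -> 'I_3) (a : 'I_3) (z : X) : R :=
  #|[set i | (pop i == a) && (x i == z)]|%:R / (popsize pop a)%:R.

Definition mixS (R : realFieldType) (I : finType) (pop : I -> 'I_3) (S : {set I})
  (i : I) : R :=
  \sum_(a < 3) (#|S :&: popset pop a|%:R / #|S|%:R) * emp R pop a i.

Definition dwstar (R : realFieldType) (X : Type) (k : X -> X -> R)
  (I : finType) (x : I -> X) (pop : I -> 'I_3) (S1 S2 : {set I}) : R :=
  (#|S1| * #|S2|)%:R / (#|S1| + #|S2|)%:R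
  * mmd2 k x (mixS R pop S1) (mixS R pop S2).

Definition BS_run (R : realFieldType) (X : Type) (k : X -> X -> R)
  (I : finType) (x : I -> X) (pop : I -> 'I_3) (E : {set I})
  (C1 C2 : nat -> {set I}) : Prop :=
  C1 0%N = set0 /\ C2 0%N = E /\
  forall r : nat, (1 <= r <= #|E| - 1)%N ->
    exists2 c, c \in C2 r.-1 &
      (forall c', c' \in C2 r.-1 ->
         dwstar k x pop (c' |: C1 r.-1) (C2 r.-1 :\ c')
         <= dwstar k x pop (c |: C1 r.-1) (C2 r.-1 :\ c)) /\
      C1 r = c |: C1 r.-1 /\ C2 r = C2 r.-1 :\ c.

Definition transferred_from (I : finType) (pop : I -> 'I_3)
  (C1 : nat -> {set I}) (r : nat) (a : 'I_3) : Prop :=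
  C1 r :\: C1 r.-1 \subset popset pop a.

Definition p1 : 'I_3 := @Ordinal 3 0 isT.
Definition p2 : 'I_3 := @Ordinal 3 1 isT.
Definition p3 : 'I_3 := @Ordinal 3 2 isT.

(* Main.v *)
Require Import Defs.
From HB Require Import structures.
From mathcomp Require Import all_boot all_order all_algebra.
From mathcomp Require Import ring lra zify.
Import Order.TTheory GRing.Theory Num.Theory.
Local Open Scope ring_scope.

Section Alg.
Variable R : realFieldType.
Variables (g11 g22 g33 g12 g13 g23 n1 n2 n3 : R).

Definition bilG v1 v2 v3 w1 w2 w3 : R :=
  v1*w1*g11 + v2*w2*g22 + v3*w3*g33 + (v1*w2+v2*w1)*g12 + (v1*w3+v3*w1)*g13
  + (v2*w3+v3*w2)*g23.
Definition quadG w1 w2 w3 := bilG w1 w2 w3 w1 w2 w3.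
Local Notation nn := (n1 + n2 + n3).
Definition Phi a1 a2 a3 : R :=
  (a1 + a2 + a3) * (nn - (a1 + a2 + a3)) / nn *
  quadG (a1/(a1 + a2 + a3) - (n1-a1)/(nn-(a1 + a2 + a3)))
        (a2/(a1 + a2 + a3) - (n2-a2)/(nn-(a1 + a2 + a3)))
        (a3/(a1 + a2 + a3) - (n3-a3)/(nn-(a1 + a2 + a3))).
Definition H11 := quadG (nn - n1) (-n2) (-n3).
Definition H22 := quadG (-n1) (nn - n2) (-n3).
Definition H33 := quadG (-n1) (-n2) (nn - n3).
Definition H23 := bilG (-n1) (nn - n2) (-n3) (-n1) (-n2) (nn - n3).
Definition d12 := g11 + g22 - 2 * g12.
Definition d13 := g11 + g33 - 2 * g13.
Definition d23 := g22 + g33 - 2 * g23.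
Definition A1e := (n2 - n1) * d12 + n3 * (d13 - d23).
Definition A2e := (n3 - n1) * d13 + n2 * (d12 - d23).
Definition A3e := n1 * (n2 + n3 - 1) * (d13 - d12) + (n3 - n2) * (n1 + 1) * d23.

Hypothesis n1p : 1 <= n1.
Hypothesis n2p : 1 <= n2.
Hypothesis n3p : 1 <= n3.

Ltac hy := move: n1p n2p n3p => ? ? ?.
Ltac unf := rewrite /Phi /A1e /A2e /A3e /H11 /H22 /H33 /H23 /quadG /bilG /d12 /d13 /d23.
Ltac sc := repeat (apply/andP; split); apply: lt0r_neq0; hy; lra.
Ltac nz := apply: lt0r_neq0; hy; lra.

Lemma L_a1 : Phi 1 0 0 - Phi 0 1 0 = A1e / (nn - 1).
Proof.
unf; field. sc.
Qed.

Lemma L_a2 : Phi 1 0 0 - Phi 0 0 1 = A2e / (nn - 1).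
Proof.
unf; field. sc.
Qed.

Lemma L_c2a r : 0 < r -> r + 1 < nn ->
  Phi (r+1) 0 0 - Phi r 1 0 = (r*nn*d12 + (r+1)*A1e)/((r+1)*(nn-r-1)).
Proof.
move=> r0 rn.
unf; field. sc.
Qed.

Lemma L_c2b r : 0 < r -> r + 1 < nn ->
  Phi (r+1) 0 0 - Phi r 0 1 = (r*nn*d13 + (r+1)*A2e)/((r+1)*(nn-r-1)).
Proof.
move=> r0 rn.
unf; field. sc.
Qed.

Lemma L_c3 r : 0 < r -> r < nn -> Phi r 0 0 = r * H11 / (nn * (nn - r)).
Proof.
move=> r0 rn.
unf; rewrite !addr0; field. sc.
Qed.

Lemma L_H11 : 4 * H11 = nn^+2 * d12 + 2 * nn * A1e
   + quadG (nn - n1 - n1) (nn - n2 - n2) (-(2 * n3)).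
Proof. unf; ring. Qed.

Lemma L_c4 : Phi n1 1 0 - Phi n1 0 1 = A3e / ((n1 + 1) * (nn - n1 - 1)).
Proof.
unf; field. sc.
Qed.

Lemma L_c5 s : 0 <= s -> n1 + s + 1 < nn ->
  Phi n1 (s+1) 0 - Phi n1 s 1 =
  (nn * A3e + 2 * s * (H22 - H23)) / (nn * (n1 + s + 1) * (nn - n1 - s - 1)).
Proof.
move=> s0 sn.
unf; field. sc.
Qed.

Lemma L_A3 : nn * A3e = (1 - 2 * n2) * H22 + 2 * (n2 - n3) * H23 + (2 * n3 - 1) * H33.
Proof. unf; ring. Qed.

Lemma L_d23 : nn ^+ 2 * d23 = H22 + H33 - 2 * H23.
Proof. unf; ring. Qed.

Lemma L_c6 s : 0 <= s -> n1 + s < nn ->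
  Phi n1 s 0 = (- H22 + n1^+2 * nn * d12 / (n1 + s) + n3^+2 * nn * d23 / (nn - n1 - s)) / nn.
Proof.
move=> s0 sn.
unf; field. sc.
Qed.

Lemma L_c7 t : 0 <= t -> t < n3 ->
  Phi n1 n2 t = (n3 - t) * H33 / (nn * (n1 + n2 + t)).
Proof.
move=> t0 tn.
unf; field. sc.
Qed.

Lemma L_q23 a b : quadG (- a * n1 - b * n1) (a * (nn - n2) - b * n2) (- a * n3 + b * (nn - n3))
   = a^+2 * H22 + 2 * a * b * H23 + b^+2 * H33.
Proof. unf; ring. Qed.


Hypothesis psd : forall t1 t2 t3, 0 <= quadG t1 t2 t3.
Hypothesis d12p : 0 < d12.
Hypothesis d13p : 0 < d13.
Hypothesis d23p : 0 < d23.

Lemma nn_gt0 : 0 < nn. Proof. hy; lra. Qed.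

Lemma divpos (a b : R) : 0 < b -> (0 <= a / b) = (0 <= a).
Proof. by move=> hb; rewrite pmulr_lge0 // invr_gt0. Qed.

Lemma P_a1 : Phi 0 1 0 <= Phi 1 0 0 <-> 0 <= A1e.
Proof. have hp : 0 < nn - 1 by hy; lra. by rewrite -subr_ge0 L_a1 divpos. Qed.

Lemma P_a2 : Phi 0 0 1 <= Phi 1 0 0 <-> 0 <= A2e.
Proof. have hp : 0 < nn - 1 by hy; lra. by rewrite -subr_ge0 L_a2 divpos. Qed.

Lemma P_c2a r : 0 < r -> r + 1 < nn -> 0 <= A1e -> Phi r 1 0 < Phi (r+1) 0 0.
Proof.
move=> r0 rn hA; rewrite -subr_gt0 L_c2a //; apply: divr_gt0; last first.
  by apply: mulr_gt0; hy; lra.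
have := mulr_gt0 (mulr_gt0 r0 nn_gt0) d12p.
have : 0 <= (r + 1) * A1e by apply: mulr_ge0 => //; lra.
lra.
Qed.

Lemma P_c2b r : 0 < r -> r + 1 < nn -> 0 <= A2e -> Phi r 0 1 < Phi (r+1) 0 0.
Proof.
move=> r0 rn hA; rewrite -subr_gt0 L_c2b //; apply: divr_gt0; last first.
  by apply: mulr_gt0; hy; lra.
have := mulr_gt0 (mulr_gt0 r0 nn_gt0) d13p.
have : 0 <= (r + 1) * A2e by apply: mulr_ge0 => //; lra.
lra.
Qed.

Lemma H11_gt0 : 0 <= A1e -> 0 < H11.
Proof.
move=> hA.
have e := L_H11.
have := psd (nn - n1 - n1) (nn - n2 - n2) (-(2 * n3)).
have : 0 < nn ^+ 2 * d12 by apply: mulr_gt0 => //; apply: exprn_gt0; exact: nn_gt0.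
have : 0 <= 2 * nn * A1e by apply: mulr_ge0 => //; apply: mulr_ge0 => //; exact: ltW nn_gt0.
lra.
Qed.

Lemma P_c3 r : 0 < r -> r + 1 < nn -> 0 <= A1e -> Phi r 0 0 < Phi (r+1) 0 0.
Proof.
move=> r0 rn hA.
rewrite L_c3 ?L_c3 //; last by lra. 2: by lra.
rewrite -subr_gt0.
have -> : (r + 1) * H11 / (nn * (nn - (r + 1))) - r * H11 / (nn * (nn - r))
   = H11 / ((nn - r) * (nn - r - 1)).
  field. sc.
apply: divr_gt0; first exact: H11_gt0.
apply: mulr_gt0; lra.
Qed.

Lemma P_c4 : Phi n1 0 1 <= Phi n1 1 0 <-> 0 <= A3e.
Proof.
have hp : 0 < (n1 + 1) * (nn - n1 - 1) by apply: mulr_gt0; hy; lra.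
by rewrite -subr_ge0 L_c4 divpos.
Qed.

Lemma P_c5 s : 1 <= s -> s + 1 <= n2 -> 0 <= A3e -> Phi n1 s 1 < Phi n1 (s+1) 0.
Proof.
move=> s1 s2 hA.
have sn : n1 + s + 1 < nn by hy; lra.
rewrite -subr_gt0 L_c5 //; last by lra.
apply: divr_gt0; last first.
  apply: mulr_gt0; last by lra.
  apply: mulr_gt0; [exact: nn_gt0 | hy; lra].
have iden : nn * A3e + 2 * s * (H22 - H23)
   = (2 * n3 - 1) * (nn ^+ 2 * d23) - 2 * (n3 + n2 - 1 - s) * (H22 - H23).
  rewrite L_A3 L_d23; ring.
have D0 : 0 < nn ^+ 2 * d23 by apply: mulr_gt0 => //; apply: exprn_gt0; exact: nn_gt0.
have A0 : 0 <= nn * A3e by apply: mulr_ge0 => //; exact: ltW nn_gt0.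
have D1 : 0 < (2 * n3 - 1) * (nn ^+ 2 * d23) by apply: mulr_gt0 => //; hy; lra.
case: (ltrgtP (H22 - H23) 0) => he.
- rewrite iden.
  have : 0 < (n3 + n2 - 1 - s) * (H23 - H22) by apply: mulr_gt0; hy; lra.
  lra.
- have : 0 < s * (H22 - H23) by apply: mulr_gt0 => //; lra.
  lra.
- by rewrite iden he mulr0 subr0.
Qed.

Lemma P_c6 s : 1 <= s -> s + 1 <= n2 ->
  2 * Phi n1 s 0 <= Phi n1 (s - 1) 0 + Phi n1 (s + 1) 0.
Proof.
move=> s1 s2.
rewrite !L_c6; try (hy; lra).
rewrite -subr_ge0.
set a := n1 ^+ 2 * nn * d12.
set b := n3 ^+ 2 * nn * d23.
have ha : 0 <= a.
  apply: mulr_ge0; last exact: ltW.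
  apply: mulr_ge0; [exact: sqr_ge0 | exact: ltW nn_gt0].
have hb : 0 <= b.
  apply: mulr_ge0; last exact: ltW.
  apply: mulr_ge0; [exact: sqr_ge0 | exact: ltW nn_gt0].
have -> : (- H22 + a / (n1 + (s - 1)) + b / (nn - n1 - (s - 1))) / nn +
  (- H22 + a / (n1 + (s + 1)) + b / (nn - n1 - (s + 1))) / nn -
  2 * ((- H22 + a / (n1 + s) + b / (nn - n1 - s)) / nn)
  = (2 * a / ((n1 + s - 1) * (n1 + s) * (n1 + s + 1))
     + 2 * b / ((nn - n1 - s - 1) * (nn - n1 - s) * (nn - n1 - s + 1))) / nn.
  field. sc.
apply: divr_ge0; last exact: ltW nn_gt0.
apply: addr_ge0; apply: divr_ge0; try (apply: mulr_ge0; lra);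
  repeat apply: mulr_ge0; hy; lra.
Qed.

Lemma H22_ge0 : 0 <= H22. Proof. exact: psd. Qed.
Lemma H33_ge0 : 0 <= H33. Proof. exact: psd. Qed.

Lemma H33_gt0 : 0 <= A3e -> 0 < H33.
Proof.
move=> hA.
have h33 := H33_ge0; have h22 := H22_ge0.
rewrite lt_neqAle h33 andbT; apply/negP => /eqP h0.
have q := psd (- H23 * n1 - (-(H22 + 1)) * n1) (H23 * (nn - n2) - (-(H22 + 1)) * n2)
           (- H23 * n3 + (-(H22 + 1)) * (nn - n3)).
rewrite L_q23 -h0 mulr0 addr0 in q.
have h23 : H23 = 0.
  have : H23 ^+ 2 * (H22 + 2) <= 0 by nra.
  move=> hh; apply/eqP; rewrite -sqrf_eq0 eq_le sqr_ge0 andbT.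
  nra.
have := L_A3; rewrite h23 -h0 => e.
have A0 : 0 <= nn * A3e by apply: mulr_ge0 => //; exact: ltW nn_gt0.
have h22' : H22 = 0.
  apply/eqP; rewrite eq_le h22 andbT. hy. nra.
have := L_d23; rewrite h22' h23 -h0 => e2.
have D0 : 0 < nn ^+ 2 * d23 by apply: mulr_gt0 => //; apply: exprn_gt0; exact: nn_gt0.
lra.
Qed.

Lemma P_c7 t : 0 <= t -> t + 1 < n3 -> 0 <= A3e -> Phi n1 n2 (t + 1) < Phi n1 n2 t.
Proof.
move=> t0 tn hA.
rewrite L_c7 ?L_c7 //; try lra.
rewrite -subr_gt0.
have -> : (n3 - t) * H33 / (nn * (n1 + n2 + t)) - (n3 - (t + 1)) * H33 / (nn * (n1 + n2 + (t + 1)))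
   = H33 / ((n1 + n2 + t) * (n1 + n2 + t + 1)).
  field. sc.
apply: divr_gt0; first exact: H33_gt0.
apply: mulr_gt0; hy; lra.
Qed.

End Alg.

Section Kern.
Variables (R : realFieldType) (X : eqType) (k : X -> X -> R) (I : finType) (x : I -> X).
Hypothesis ksym : forall u v, k u v = k v u.
Hypothesis kpsd : forall N (y : 'I_N -> X) (c : 'I_N -> R), 0 <= kernel_quad k y c.
Hypothesis kpos : forall N (y : 'I_N -> X) (c : 'I_N -> R), injective y ->
          \sum_(i < N) c i = 0 -> (exists i, c i != 0) -> 0 < kernel_quad k y c.

Definition B (p q : I -> R) := \sum_i \sum_j p i * q j * k (x i) (x j).

Lemma B_sym p q : B p q = B q p.
Proof.
rewrite /B exchange_big; apply: eq_bigr => i _; apply: eq_bigr => j _.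
by rewrite ksym; ring.
Qed.

Lemma B_linl (a b c : R) p q r w :
  B (fun i => a * p i + b * q i + c * r i) w = a * B p w + b * B q w + c * B r w.
Proof.
rewrite /B !mulr_sumr -!big_split; apply: eq_bigr => i _.
rewrite !mulr_sumr -!big_split; apply: eq_bigr => j _ /=; ring.
Qed.

Lemma B_linr (a b c : R) p q r w :
  B w (fun i => a * p i + b * q i + c * r i) = a * B w p + b * B w q + c * B w r.
Proof. by rewrite B_sym B_linl !(B_sym w). Qed.

Lemma B_psd p : 0 <= B p p.
Proof.
have := kpsd #|I| (fun j : 'I_#|I| => x (enum_val j)) (fun j => p (enum_val j)).
suff -> : kernel_quad k (fun j : 'I_#|I| => x (enum_val j)) (fun j => p (enum_val j))
   = B p p by [].
rewrite /kernel_quad /B [RHS](reindex (fun j : 'I_#|I| => enum_val j)) /=; last by apply: onW_bij; exact: enum_val_bij.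
apply: eq_bigr => i _.
by rewrite [RHS](reindex (fun j : 'I_#|I| => enum_val j)) /=; last by apply: onW_bij; exact: enum_val_bij.
Qed.

Lemma B_pos p : \sum_i p i = 0 -> (exists z, \sum_(i | x i == z) p i != 0) -> 0 < B p p.
Proof.
move=> hs [z hz].
have [i0 hi0] : exists i0, x i0 == z.
  apply/existsP; apply: contraR hz => /existsPn h.
  by rewrite big_pred0 // => i; apply/negbTE/h.
pose L := undup [seq x i | i <- enum I].
have memL i : x i \in L by rewrite mem_undup; apply: map_f; rewrite mem_enum.
pose N := size L.
pose f (i : I) : 'I_N := Ordinal (etrans (index_mem _ _) (memL i)).
pose y (j : 'I_N) := nth (x i0) L j.
have yf i : y (f i) = x i by rewrite /y /= nth_index.
have yinj : injective y.
  move=> j1 j2 /eqP; rewrite /y nth_uniq ?undup_uniq // => /eqP; exact: val_inj.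
have finj i1 i2 : (f i1 == f i2) = (x i1 == x i2).
  apply/eqP/eqP => [e|e]; first by rewrite -yf e yf.
  by apply: val_inj; rewrite /= e.
pose c (j : 'I_N) := \sum_(i | f i == j) p i.
have -> : B p p = kernel_quad k y c.
  rewrite /kernel_quad /B.
  rewrite (partition_big f xpredT) //=.
  apply: eq_bigr => j _.
  have -> : \sum_(l < N) c j * c l * k (y j) (y l)
      = \sum_(l < N) \sum_(i | f i == j) p i * (c l * k (y j) (y l)).
    by apply: eq_bigr => l _; rewrite -mulrA /c mulr_suml.
  rewrite [RHS]exchange_big /=; apply: eq_bigr => i /eqP fi.
  rewrite (partition_big f xpredT) //=.
  apply: eq_bigr => l _.
  rewrite /c mulr_suml mulr_sumr; apply: eq_bigr => i' /eqP fi'.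
  by rewrite -fi -fi' !yf mulrA.
apply: kpos => //.
  rewrite -[RHS]hs (partition_big f xpredT) //=.
exists (f i0); rewrite /c.
by rewrite (eq_bigl (fun i => x i == z)) // => i; rewrite finj (eqP hi0).
Qed.

End Kern.

Lemma ord3 (o : 'I_3) : [\/ o = p1, o = p2 | o = p3].
Proof.
case: o => [[|[|[|m]]] h].
- by apply: Or31; apply: val_inj.
- by apply: Or32; apply: val_inj.
- by apply: Or33; apply: val_inj.
- by [].
Qed.

Lemma sum3 (R : nmodType) (F : 'I_3 -> R) : \sum_(a < 3) F a = F p1 + F p2 + F p3.
Proof.
rewrite !big_ord_recr big_ord0 /= add0r.
by congr (F _ + F _ + F _); apply: val_inj.
Qed.

Section Main.
Variables (R : realFieldType) (X : eqType) (k : X -> X -> R) (I : finType) (x : I -> X)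
  (pop : I -> 'I_3).
Hypothesis ksym : forall u v, k u v = k v u.
Hypothesis npos : forall a, (0 < popsize pop a)%N.
Hypothesis kpsd : forall N (y : 'I_N -> X) (c : 'I_N -> R), 0 <= kernel_quad k y c.
Hypothesis kpos : forall N (y : 'I_N -> X) (c : 'I_N -> R), injective y ->
          \sum_(i < N) c i = 0 -> (exists i, c i != 0) -> 0 < kernel_quad k y c.

Local Notation e a := (emp R pop a).
Local Notation BB := (B R X k I x).
Definition G a b := BB (e a) (e b).
Definition nR a : R := (popsize pop a)%:R.
Definition cnt (S : {set I}) a := #|S :&: popset pop a|.
Definition mix (a1 a2 a3 : R) (i : I) : R := a1 * e p1 i + a2 * e p2 i + a3 * e p3 i.

Definition PhiN (a1 a2 a3 : nat) :=
  Phi R (G p1 p1) (G p2 p2) (G p3 p3) (G p1 p2) (G p1 p3) (G p2 p3)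
      (nR p1) (nR p2) (nR p3) a1%:R a2%:R a3%:R.

Lemma B_ext p p' q q' : p =1 p' -> q =1 q' -> BB p q = BB p' q'.
Proof.
move=> hp hq; rewrite /B; apply: eq_bigr => i _; apply: eq_bigr => j _.
by rewrite hp hq.
Qed.

Lemma B_mix a1 a2 a3 b1 b2 b3 :
  BB (mix a1 a2 a3) (mix b1 b2 b3) =
  bilG R (G p1 p1) (G p2 p2) (G p3 p3) (G p1 p2) (G p1 p3) (G p2 p3) a1 a2 a3 b1 b2 b3.
Proof.
rewrite /mix (@B_linl R X k I x) !(@B_linr R X k I x ksym) /bilG /G.
rewrite (@B_sym R X k I x ksym (e p2) (e p1)) (@B_sym R X k I x ksym (e p3) (e p1)) (@B_sym R X k I x ksym (e p3) (e p2)).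
ring.
Qed.

Lemma mmd2B p q : mmd2 k x p q = BB p p + BB q q - 2 * BB p q.
Proof. by []. Qed.

Lemma mmd2_mix a1 a2 a3 b1 b2 b3 :
  mmd2 k x (mix a1 a2 a3) (mix b1 b2 b3) =
  quadG R (G p1 p1) (G p2 p2) (G p3 p3) (G p1 p2) (G p1 p3) (G p2 p3) (a1 - b1) (a2 - b2) (a3 - b3).
Proof. rewrite mmd2B !B_mix /quadG /bilG; ring. Qed.

Lemma card3 (S : {set I}) : #|S| = (cnt S p1 + cnt S p2 + cnt S p3)%N.
Proof.
rewrite -(cardsID (popset pop p1) S) -(cardsID (popset pop p2) (S :\: popset pop p1)).
have e1 : (S :\: popset pop p1) :&: popset pop p2 = S :&: popset pop p2.
  by apply/setP => i; rewrite !inE; case: (ord3 (pop i)) => ->; rewrite ?andbF ?andbT.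
have e2 : (S :\: popset pop p1) :\: popset pop p2 = S :&: popset pop p3.
  by apply/setP => i; rewrite !inE; case: (ord3 (pop i)) => ->; rewrite ?andbF ?andbT.
by rewrite e1 e2 /cnt addnA.
Qed.

Lemma cardI : #|I| = (popsize pop p1 + popsize pop p2 + popsize pop p3)%N.
Proof. by rewrite -cardsT card3 /cnt /popsize !setTI. Qed.

Lemma cnt_le S a : (cnt S a <= popsize pop a)%N.
Proof. by apply: subset_leq_card; apply: subsetIr. Qed.

Lemma cntC S a : cnt (~: S) a = (popsize pop a - cnt S a)%N.
Proof.
rewrite /cnt /popsize -(cardsID S (popset pop a)) (setIC S) addKn.
by apply: eq_card => i; rewrite !inE andbC.
Qed.

Lemma cardC' (S : {set I}) : #|~: S| = (#|I| - #|S|)%N.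
Proof. by rewrite cardsCs setCK. Qed.


Lemma mmd2_ext p p' q q' : p =1 p' -> q =1 q' -> mmd2 k x p q = mmd2 k x p' q'.
Proof. by move=> hp hq; rewrite !mmd2B (@B_ext p p' p p' hp hp) (@B_ext q q' q q' hq hq) (@B_ext p p' q q' hp hq). Qed.

Lemma mixS_eq (S : {set I}) : mixS R pop S =1
  mix ((cnt S p1)%:R / #|S|%:R) ((cnt S p2)%:R / #|S|%:R) ((cnt S p3)%:R / #|S|%:R).
Proof. by move=> i; rewrite /mixS sum3. Qed.

Lemma KL (S : {set I}) : (0 < #|S|)%N -> (#|S| < #|I|)%N ->
  dwstar k x pop S (~: S) = PhiN (cnt S p1) (cnt S p2) (cnt S p3).
Proof.
move=> h0 h1.
rewrite /dwstar (@mmd2_ext _ _ _ _ (mixS_eq S) (mixS_eq (~: S))) mmd2_mix.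
rewrite !cntC cardC' /PhiN /Phi.
have hm := card3 S.
have hle : (#|S| <= #|I|)%N by apply: ltnW.
rewrite subnKC // !natrB ?cnt_le // natrM.
rewrite hm cardI !natrD /nR.
by rewrite natrB ?natrD // -hm -cardI.
Qed.


Lemma sum_ind (P : pred I) : \sum_i ((P i)%:R : R) = #|P|%:R.
Proof.
rewrite -natr_sum; congr (_%:R); rewrite -sum1_card [RHS]big_mkcond /=.
by apply: eq_bigr => i _; rewrite unfold_in; case: (P i).
Qed.

Lemma sum_inds (A : {set I}) : \sum_i (((i \in A) : nat)%:R : R) = #|A|%:R.
Proof.
rewrite -natr_sum; congr (_%:R); rewrite -sum1_card [RHS]big_mkcond /=.
by apply: eq_bigr => i _; case: (i \in A).
Qed.

Lemma nR_gt0 a : 0 < nR a.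
Proof. by rewrite /nR ltr0n. Qed.

Lemma sum_e a : \sum_i e a i = 1.
Proof.
rewrite /emp -mulr_suml sum_ind /nR.
have := nR_gt0 a; rewrite /nR /popsize => h.
rewrite -cardsE divff //; exact: lt0r_neq0.
Qed.

Lemma sum_e_z a z : \sum_(i | x i == z) e a i = emp_mass R x pop a z.
Proof.
rewrite /emp -mulr_suml /emp_mass; congr (_ / _).
rewrite big_mkcond /= -sum_inds; apply: eq_bigr => i _; rewrite inE.
by case: (x i == z); rewrite ?andbT ?andbF.
Qed.


Lemma psd3 t1 t2 t3 :
  0 <= quadG R (G p1 p1) (G p2 p2) (G p3 p3) (G p1 p2) (G p1 p3) (G p2 p3) t1 t2 t3.
Proof. by rewrite /quadG -B_mix; apply: B_psd. Qed.

Lemma d_pos a b : (exists z, emp_mass R x pop a z != emp_mass R x pop b z) ->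
  0 < mmd2 k x (e a) (e b).
Proof.
move=> [z hz].
pose p i := 1 * e a i + (-1) * e b i + 0 * e b i.
have hp : 0 < BB p p.
  apply: B_pos => //.
    rewrite big_split big_split /= -!mulr_sumr !sum_e; ring.
  exists z; rewrite big_split big_split /= -!mulr_sumr !sum_e_z.
  by rewrite mul0r addr0 mul1r mulN1r subr_eq0.
move: hp; rewrite /p (@B_linl R X k I x) !(@B_linr R X k I x ksym) mmd2B.
rewrite (@B_sym R X k I x ksym (e b) (e a)).
suff -> : 1 * (1 * BB (e a) (e a) + -1 * BB (e a) (e b) + 0 * BB (e a) (e b)) +
  -1 * (1 * BB (e a) (e b) + -1 * BB (e b) (e b) + 0 * BB (e b) (e b)) +
  0 * (1 * BB (e a) (e b) + -1 * BB (e b) (e b) + 0 * BB (e b) (e b))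
  = BB (e a) (e a) + BB (e b) (e b) - 2 * BB (e a) (e b) by [].
ring.
Qed.


Lemma cnt_bump (S : {set I}) c a : c \notin S ->
  cnt (c |: S) a = (cnt S a + (pop c == a))%N.
Proof.
move=> cS; rewrite /cnt; case h: (pop c == a).
- have -> : (c |: S) :&: popset pop a = c |: (S :&: popset pop a).
    by apply/setP => i; rewrite !inE; case: (i =P c) => [->|]; rewrite ?h ?andbT.
  by rewrite cardsU1 !inE (negbTE cS) addnC.
- have -> : (c |: S) :&: popset pop a = S :&: popset pop a.
    by apply/setP => i; rewrite !inE; case: (i =P c) => [->|]; rewrite ?h ?andbF ?(negbTE cS).
  by rewrite addn0.
Qed.

Lemma avail (S : {set I}) a : (cnt S a < popsize pop a)%N -> exists c, c \notin S /\ pop c = a.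
Proof.
move=> h.
have : ~~ (popset pop a \subset S).
  apply: contraL h => /setIidPr; rewrite /cnt setIC => ->; by rewrite ltnn.
by case/subsetPn => c; rewrite inE => /eqP <- cS; exists c.
Qed.

Lemma exhausted (S : {set I}) c a : cnt S a = popsize pop a -> c \notin S -> pop c != a.
Proof.
move=> h cS; apply/negP => /eqP pc.
have : S :&: popset pop a \subset popset pop a by apply: subsetIr.
move/(subset_cardP h) => e.
have : c \in S :&: popset pop a by rewrite e inE pc.
by rewrite inE (negbTE cS).
Qed.

Definition PhiB (S : {set I}) (a : 'I_3) :=
  PhiN (cnt S p1 + (a == p1)) (cnt S p2 + (a == p2)) (cnt S p3 + (a == p3)).

Hypothesis hdist : forall a b : 'I_3, a != b ->
  exists z : X, emp_mass R x pop a z != emp_mass R x pop b z.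

Lemma nge a : 1 <= nR a. Proof. by rewrite /nR ler1n npos. Qed.
Lemma d12p : 0 < d12 R (G p1 p1) (G p2 p2) (G p1 p2).
Proof. by have := @d_pos p1 p2 (@hdist p1 p2 isT); rewrite mmd2B /d12 /d13 /d23 /G. Qed.
Lemma d13p : 0 < d13 R (G p1 p1) (G p3 p3) (G p1 p3).
Proof. by have := @d_pos p1 p3 (@hdist p1 p3 isT); rewrite mmd2B /d12 /d13 /d23 /G. Qed.
Lemma d23p : 0 < d23 R (G p2 p2) (G p3 p3) (G p2 p3).
Proof. by have := @d_pos p2 p3 (@hdist p2 p3 isT); rewrite mmd2B /d12 /d13 /d23 /G. Qed.

Ltac fin := first [exact: nge | exact: psd3 | exact: d12p | exact: d13p | exact: d23p].

Definition A1N := A1e R (G p1 p1) (G p2 p2) (G p3 p3) (G p1 p2) (G p1 p3) (G p2 p3)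
  (nR p1) (nR p2) (nR p3).
Definition A2N := A2e R (G p1 p1) (G p2 p2) (G p3 p3) (G p1 p2) (G p1 p3) (G p2 p3)
  (nR p1) (nR p2) (nR p3).
Definition A3N := A3e R (G p1 p1) (G p2 p2) (G p3 p3) (G p1 p2) (G p1 p3) (G p2 p3)
  (nR p1) (nR p2) (nR p3).

Local Notation N1 := (popsize pop p1).
Local Notation N2 := (popsize pop p2).
Local Notation N3 := (popsize pop p3).

Lemma natle {a b : nat} : (a <= b)%N -> (a%:R : R) <= b%:R.
Proof. by rewrite ler_nat. Qed.

Lemma natS n : (n.+1)%:R = n%:R + 1 :> R.
Proof. by rewrite -addn1 natrD. Qed.

Lemma W_a1 : PhiN 0 1 0 <= PhiN 1 0 0 <-> 0 <= A1N.
Proof. rewrite /PhiN mulr0n mulr1n; apply: P_a1; fin. Qed.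

Lemma W_a2 : PhiN 0 0 1 <= PhiN 1 0 0 <-> 0 <= A2N.
Proof. rewrite /PhiN mulr0n mulr1n; apply: P_a2; fin. Qed.

Lemma W_c2a r : (0 < r)%N -> (r < N1)%N -> 0 <= A1N -> PhiN r 1 0 < PhiN r.+1 0 0.
Proof.
move=> h0 h1 hA; rewrite /PhiN (natS r) ?mulr0n ?mulr1n.
have := natle h1; rewrite -addn1 natrD => h1'.
have := nge p2; have := nge p3; rewrite /nR => ? ?.
apply: P_c2a => //; try fin; [by rewrite ltr0n | lra].
Qed.

Lemma W_c2b r : (0 < r)%N -> (r < N1)%N -> 0 <= A2N -> PhiN r 0 1 < PhiN r.+1 0 0.
Proof.
move=> h0 h1 hA; rewrite /PhiN (natS r) ?mulr0n ?mulr1n.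
have := natle h1; rewrite -addn1 natrD => h1'.
have := nge p2; have := nge p3; rewrite /nR => ? ?.
apply: P_c2b => //; try fin; [by rewrite ltr0n | lra].
Qed.

Lemma W_c3 r : (0 < r)%N -> (r < N1)%N -> 0 <= A1N -> PhiN r 0 0 < PhiN r.+1 0 0.
Proof.
move=> h0 h1 hA; rewrite /PhiN (natS r) ?mulr0n ?mulr1n.
have := natle h1; rewrite -addn1 natrD => h1'.
have := nge p2; have := nge p3; rewrite /nR => ? ?.
apply: P_c3 => //; try fin; [by rewrite ltr0n | lra].
Qed.

Lemma W_c4 : PhiN N1 0 1 <= PhiN N1 1 0 <-> 0 <= A3N.
Proof. rewrite /PhiN mulr0n mulr1n; apply: P_c4; fin. Qed.

Lemma W_c5 s : (0 < s)%N -> (s < N2)%N -> 0 <= A3N -> PhiN N1 s 1 < PhiN N1 s.+1 0.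
Proof.
move=> h0 h1 hA; rewrite /PhiN (natS s) ?mulr0n ?mulr1n.
have := natle h1; rewrite -addn1 natrD => h1'.
have := natle h0 => h0'.
apply: P_c5 => //; try fin.
Qed.

Lemma W_c6 s : (0 < s)%N -> (s < N2)%N ->
  2 * PhiN N1 s 0 <= PhiN N1 s.-1 0 + PhiN N1 s.+1 0.
Proof.
move=> h0 h1; rewrite /PhiN (natS s) ?mulr0n -subn1 natrB // ?mulr1n.
have := natle h1; rewrite -addn1 natrD => h1'.
have := natle h0 => h0'.
apply: P_c6 => //; try fin.
Qed.

Lemma W_c7 t : (t.+1 < N3)%N -> 0 <= A3N -> PhiN N1 N2 t.+1 < PhiN N1 N2 t.
Proof.
move=> h1 hA; rewrite /PhiN (natS t).
have := natle h1; rewrite -addn1 natrD (natS t) => h1'.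
apply: P_c7 => //; try fin; try (by rewrite ler0n); rewrite /nR; lra.
Qed.

Variables C1 C2 : nat -> {set I}.
Hypothesis run : BS_run k x pop [set: I] C1 C2.

Lemma inv r : (r <= #|I| - 1)%N -> C2 r = ~: C1 r /\ #|C1 r| = r.
Proof.
case: run => h10 [h20 hr].
elim: r => [|r IH] hle; first by rewrite h10 h20 setC0 cards0.
have [|c cin [_ [e1 e2]]] := hr r.+1; first by rewrite cardsT hle.
have [IH2 IH1] := IH (ltnW hle).
move: cin; rewrite /= IH2 inE => cS.
split.
  by rewrite e1 e2 IH2; apply/setP => i; rewrite !inE negb_or andbC.
by rewrite e1 cardsU1 cS IH1.
Qed.

Lemma step r : (1 <= r <= #|I| - 1)%N -> exists c, [/\ c \notin C1 r.-1, C1 r = c |: C1 r.-1 &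
   forall c', c' \notin C1 r.-1 -> PhiB (C1 r.-1) (pop c') <= PhiB (C1 r.-1) (pop c)].
Proof.
move=> /andP [r1 rn].
case: run => h10 [h20 hr].
have [|c cin [hmax [e1 e2]]] := hr r; first by rewrite cardsT r1 rn.
have [I2 I1] := @inv r.-1 (leq_trans (leq_pred r) rn).
move: cin; rewrite I2 inE => cS.
exists c; split => // c' c'S.
have hcard c0 : c0 \notin C1 r.-1 -> (0 < #|c0 |: C1 r.-1| < #|I|)%N.
  move=> h; rewrite cardsU1 h I1 add1n prednK //.
  by apply/andP; split => //; lia.
have hC c0 : c0 \notin C1 r.-1 -> C2 r.-1 :\ c0 = ~: (c0 |: C1 r.-1).
  by move=> _; rewrite I2; apply/setP => i; rewrite !inE negb_or andbC.
have /andP [ha1 ha2] := hcard c cS.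
have /andP [hb1 hb2] := hcard c' c'S.
have := hmax c'; rewrite I2 inE => /(_ c'S).
rewrite -I2 !hC // !KL // /PhiB => H.
by rewrite !(@cnt_bump _ _ _ c'S) !(@cnt_bump _ _ _ cS) in H.
Qed.

Lemma trans_iff r c a : c \notin C1 r.-1 -> C1 r = c |: C1 r.-1 ->
  transferred_from pop C1 r a <-> pop c = a.
Proof.
move=> cS he; rewrite /transferred_from he.
have -> : (c |: C1 r.-1) :\: C1 r.-1 = [set c].
  apply/setP => i; rewrite !inE; case: (i =P c) => [->|ne]; first by rewrite cS. by case: (i \in C1 r.-1).
by rewrite sub1set inE; split => /eqP.
Qed.

Lemma dw_run r : (1 <= r <= #|I| - 1)%N ->
  dwstar k x pop (C1 r) (C2 r) = PhiN (cnt (C1 r) p1) (cnt (C1 r) p2) (cnt (C1 r) p3).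
Proof.
move=> /andP [r1 rn]; have [I2 I1] := @inv r rn.
rewrite I2 KL // I1 //; lia.
Qed.


Definition cnts (S : {set I}) a1 a2 a3 :=
  [/\ cnt S p1 = a1, cnt S p2 = a2 & cnt S p3 = a3].

Lemma cnts_bump (S : {set I}) (c : I) (a1 a2 a3 : nat) : c \notin S -> cnts S a1 a2 a3 ->
  [/\ pop c = p1 -> cnts (c |: S) a1.+1 a2 a3,
      pop c = p2 -> cnts (c |: S) a1 a2.+1 a3 &
      pop c = p3 -> cnts (c |: S) a1 a2 a3.+1].
Proof.
move=> cS [h1 h2 h3]; split => pc; rewrite /cnts !cnt_bump // h1 h2 h3 pc /=;
  by rewrite ?addn1 ?addn0.
Qed.

Lemma PhiB_cnts (S : {set I}) (a1 a2 a3 : nat) : cnts S a1 a2 a3 ->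
  [/\ PhiB S p1 = PhiN a1.+1 a2 a3, PhiB S p2 = PhiN a1 a2.+1 a3 &
      PhiB S p3 = PhiN a1 a2 a3.+1].
Proof. by move=> [h1 h2 h3]; rewrite /PhiB h1 h2 h3 /= !addn1 !addn0. Qed.

Lemma cnts0 : cnts set0 0 0 0.
Proof. by rewrite /cnts /cnt !set0I !cards0. Qed.

Lemma cand r (c' : I) : (r.+1 <= #|I| - 1)%N -> c' \notin C1 r ->
  dwstar k x pop (c' |: C1 r) (C2 r :\ c') = PhiB (C1 r) (pop c').
Proof.
move=> rn cS.
have [I2 I1] := @inv r (leq_trans (leqnSn r) rn).
have -> : C2 r :\ c' = ~: (c' |: C1 r).
  by rewrite I2; apply/setP => i; rewrite !inE negb_or andbC.
rewrite KL.
- by rewrite /PhiB !cnt_bump.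
- by rewrite cardsU1 cS.
- rewrite cardsU1 cS I1; lia.
Qed.

Lemma pop3 (c : I) : [\/ pop c = p1, pop c = p2 | pop c = p3].
Proof. exact: ord3. Qed.

Lemma NI : #|I| = (N1 + N2 + N3)%N.
Proof. exact: cardI. Qed.

Section PartA.
Hypothesis hA1 : 0 <= A1N.
Hypothesis hA2 : 0 <= A2N.
Hypothesis t1 : transferred_from pop C1 1 p1.

Lemma partA r : (1 <= r <= N1)%N -> cnts (C1 r) r 0 0 /\ transferred_from pop C1 r p1.
Proof.
have n2 := npos p2; have n3 := npos p3; have hN := NI.
elim: r => [|r IH] // /andP [_ rn].
have [|c [cS e1 hmax]] := @step r.+1; first by apply/andP; split => //; lia.
move: cS e1 hmax => /= cS e1 hmax.
case: r IH rn cS e1 hmax => [|r] IH rn cS e1 hmax.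
  have hp : pop c = p1 by exact: (proj1 (@trans_iff 1 c p1 cS e1) t1).
  move: cS; rewrite (proj1 (run)) => cS.
  have [b1 _ _] := @cnts_bump _ _ _ _ _ cS cnts0.
  by rewrite e1 (proj1 run); split; [exact: b1 | apply/(@trans_iff 1 c p1 _ e1); rewrite ?(proj1 run)].
have [[c1 c2 c3] _] := IH (ltnW rn).
have hc : cnts (C1 r.+1) r.+1 0 0 by [].
have [b1 b2 b3] := @cnts_bump _ _ _ _ _ cS hc.
have [q1 q2 q3] := @PhiB_cnts _ _ _ _ hc.
have hp : pop c = p1.
  case: (pop3 c) => // hpc.
  - have [|c' [c'S pc']] := @avail (C1 r.+1) p1; first by rewrite c1.
    have := hmax c' c'S; rewrite pc' hpc q1 q2 => H.
    have := @W_c2a r.+1 isT rn hA1; rewrite ltNge H //.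
  - have [|c' [c'S pc']] := @avail (C1 r.+1) p1; first by rewrite c1.
    have := hmax c' c'S; rewrite pc' hpc q1 q3 => H.
    have := @W_c2b r.+1 isT rn hA2; rewrite ltNge H //.
split; first by rewrite e1; exact: b1.
by apply/(@trans_iff r.+2 c p1 cS e1).
Qed.


Lemma partA_mono r : (1 <= r < N1)%N ->
  dwstar k x pop (C1 r) (C2 r) < dwstar k x pop (C1 r.+1) (C2 r.+1).
Proof.
move=> /andP [r1 rn].
have n2 := npos p2; have n3 := npos p3; have hN := NI.
have [[c1 c2 c3] _] := @partA r ltac:(lia).
have [[d1 d2 d3] _] := @partA r.+1 ltac:(lia).
rewrite !dw_run; try (apply/andP; split; lia).
rewrite c1 c2 c3 d1 d2 d3; exact: W_c3.
Qed.

Lemma partB1 :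
  (exists2 c, c \in C2 N1 :&: popset pop p2 &
     forall c', c' \in C2 N1 ->
       dwstar k x pop (c' |: C1 N1) (C2 N1 :\ c') <= dwstar k x pop (c |: C1 N1) (C2 N1 :\ c))
  <-> 0 <= A3N.
Proof.
have n1 := npos p1; have n2 := npos p2; have n3 := npos p3; have hN := NI.
have [hc _] := @partA N1 ltac:(lia).
have [I2 _] := @inv N1 ltac:(lia).
have [q1 q2 q3] := @PhiB_cnts _ _ _ _ hc.
have [hc1 hc2 hc3] := hc.
have hb : (N1.+1 <= #|I| - 1)%N by lia.
apply: (iff_trans _ W_c4); split.
- case=> c /setIP [cin pc2] hmax; move: cin; rewrite I2 inE => cS; move: pc2; rewrite inE => /eqP pc.
  have [|c' [c'S pc']] := @avail (C1 N1) p3; first by rewrite hc3.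
  have H : c' \in C2 N1 by rewrite I2 inE.
  by move: (hmax c' H); rewrite !cand // pc' pc q3 q2.
- move=> H.
  have [|c [cS pc]] := @avail (C1 N1) p2; first by rewrite hc2.
  exists c; first by rewrite inE I2 !inE cS pc eqxx.
  move=> c' c'in; have c'S : c' \notin C1 N1 by move: c'in; rewrite I2 inE.
  rewrite !cand // pc q2.
  case: (pop3 c') => pc'.
  + by move: (@exhausted _ _ _ hc1 c'S); rewrite pc' eqxx.
  + by rewrite pc' q2.
  + by rewrite pc' q3.
Qed.

Section PartB.
Hypothesis hA3 : 0 <= A3N.
Hypothesis t2 : transferred_from pop C1 N1.+1 p2.

Lemma partB s : (s <= N2)%N ->
  cnts (C1 (N1 + s)) N1 s 0 /\ ((0 < s)%N -> transferred_from pop C1 (N1 + s) p2).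
Proof.
have n1 := npos p1; have n2 := npos p2; have n3 := npos p3; have hN := NI.
elim: s => [|s IH] sn.
  by rewrite addn0; split => //; have [] := @partA N1 ltac:(lia).
have [[c1 c2 c3] _] := IH (ltnW sn).
rewrite addnS.
have [|c [cS e1 hmax]] := @step (N1 + s).+1; first by apply/andP; split => //; lia.
move: cS e1 hmax => /= cS e1 hmax.
have hc : cnts (C1 (N1 + s)) N1 s 0 by [].
have [b1 b2 b3] := @cnts_bump _ _ _ _ _ cS hc.
have [q1 q2 q3] := @PhiB_cnts _ _ _ _ hc.
have hp : pop c = p2.
  case: s IH sn c1 c2 c3 cS e1 hmax hc b1 b2 b3 q1 q2 q3 => [|s] IH sn c1 c2 c3 cS e1 hmax hc b1 b2 b3 q1 q2 q3.
    have t2' : transferred_from pop C1 (N1 + 0).+1 p2 by rewrite addn0.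
    exact: (proj1 (@trans_iff (N1 + 0).+1 c p2 cS e1) t2').
  case: (pop3 c) => // hpc.
  - by move: (@exhausted _ _ _ c1 cS); rewrite hpc eqxx.
  - have [|c' [c'S pc']] := @avail (C1 (N1 + s.+1)) p2; first by rewrite c2; lia.
    have := hmax c' c'S; rewrite pc' hpc q2 q3 => H.
    have := @W_c5 s.+1 isT ltac:(lia) hA3; rewrite ltNge H //.
split; first by rewrite e1; exact: b2.
by move=> _; apply/(@trans_iff (N1 + s).+1 c p2 cS e1).
Qed.

Lemma partB_conv r : (N1 < r < N1 + N2)%N ->
  2 * dwstar k x pop (C1 r) (C2 r) <=
  dwstar k x pop (C1 r.-1) (C2 r.-1) + dwstar k x pop (C1 r.+1) (C2 r.+1).
Proof.
move=> /andP [r1 r2].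
have n1 := npos p1; have n2 := npos p2; have n3 := npos p3; have hN := NI.
pose s := (r - N1)%N.
have er : r = (N1 + s)%N by rewrite /s; lia.
have e0 : r.-1 = (N1 + s.-1)%N by rewrite /s; lia.
have e2 : r.+1 = (N1 + s.+1)%N by rewrite /s; lia.
rewrite !dw_run; try (apply/andP; split; lia).
rewrite e0 e2 er.
have [[a1 a2 a3] _] := @partB s ltac:(lia).
have [[b1 b2 b3] _] := @partB s.-1 ltac:(lia).
have [[d1 d2 d3] _] := @partB s.+1 ltac:(lia).
rewrite a1 a2 a3 b1 b2 b3 d1 d2 d3.
apply: W_c6; rewrite /s; lia.
Qed.

Lemma partC t : (N1 + N2 + t <= #|I| - 1)%N -> cnts (C1 (N1 + N2 + t)) N1 N2 t.
Proof.
have n1 := npos p1; have n2 := npos p2; have n3 := npos p3; have hN := NI.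
elim: t => [|t IH] tn.
  by rewrite addn0; have [] := @partB N2 (leqnn _).
have hc := IH ltac:(lia).
have [c1 c2 c3] := hc.
rewrite addnS.
have [|c [cS e1 hmax]] := @step (N1 + N2 + t).+1; first by apply/andP; split => //; lia.
move: cS e1 hmax => /= cS e1 hmax.
have [b1 b2 b3] := @cnts_bump _ _ _ _ _ cS hc.
case: (pop3 c) => hpc.
- by move: (@exhausted _ _ _ c1 cS); rewrite hpc eqxx.
- by move: (@exhausted _ _ _ c2 cS); rewrite hpc eqxx.
- by rewrite e1; exact: b3.
Qed.

Lemma partC_dec r : (N1 + N2 <= r)%N -> (r < #|I| - 1)%N ->
  dwstar k x pop (C1 r.+1) (C2 r.+1) < dwstar k x pop (C1 r) (C2 r).
Proof.
move=> r1 r2.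
have n1 := npos p1; have n2 := npos p2; have n3 := npos p3; have hN := NI.
pose t := (r - (N1 + N2))%N.
have er : r = (N1 + N2 + t)%N by rewrite /t; lia.
have e2 : r.+1 = (N1 + N2 + t.+1)%N by rewrite /t; lia.
rewrite !dw_run; try (apply/andP; split; lia).
rewrite e2 er.
have [a1 a2 a3] := @partC t ltac:(lia).
have [d1 d2 d3] := @partC t.+1 ltac:(lia).
rewrite a1 a2 a3 d1 d2 d3.
apply: W_c7 => //; rewrite /t; lia.
Qed.

End PartB.
End PartA.
Lemma first_step c : dwstar k x pop [set c] ([set: I] :\ c) = PhiB set0 (pop c).
Proof.
have n1 := npos p1; have n2 := npos p2; have n3 := npos p3; have hN := cardI.
have e a : cnt [set c] a = (cnt set0 a + (pop c == a))%N.
  by rewrite -cnt_bump ?inE // setU0.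
rewrite (_ : [set: I] :\ c = ~: [set c]) ?setTD // KL ?cards1 //; last by lia.
by rewrite /PhiB !e.
Qed.

Lemma partA1 :
  (exists2 c, c \in popset pop p1 &
      forall c', dwstar k x pop [set c'] ([set: I] :\ c') <= dwstar k x pop [set c] ([set: I] :\ c))
  <-> 0 <= A1N /\ 0 <= A2N.
Proof.
have [q1 q2 q3] := @PhiB_cnts _ _ _ _ cnts0.
split.
- case=> c; rewrite inE => /eqP pc hmax.
  have [|c2 [_ pc2]] := @avail set0 p2; first by rewrite /cnt set0I cards0.
  have [|c3 [_ pc3]] := @avail set0 p3; first by rewrite /cnt set0I cards0.
  move: (hmax c2) (hmax c3); rewrite !first_step pc pc2 pc3 q1 q2 q3.
  by rewrite W_a1 W_a2.
- move=> [h1 h2].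
  have [|c [_ pc]] := @avail set0 p1; first by rewrite /cnt set0I cards0.
  exists c; first by rewrite inE pc.
  move=> c'; rewrite !first_step pc q1.
  case: (pop3 c') => ->; rewrite ?q1 ?q2 ?q3 //.
  + by apply/W_a1.
  + by apply/W_a2.
Qed.


End Main.

Theorem lemma2 (R : realFieldType) (X : eqType) (k : X -> X -> R)
  (I : finType) (x : I -> X) (pop : I -> 'I_3) :
  char_kernel_fin k ->
  (forall a : 'I_3, (0 < popsize pop a)%N) ->
  (forall a b : 'I_3, a != b -> exists z : X, emp_mass R x pop a z != emp_mass R x pop b z) ->
  let n1 := popsize pop p1 in
  let n2 := popsize pop p2 in
  let n3 := popsize pop p3 in
  let n := (n1 + n2 + n3)%N in
  let d12 := mmd2 k x (emp R pop p1) (emp R pop p2) in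
  let d13 := mmd2 k x (emp R pop p1) (emp R pop p3) in
  let d23 := mmd2 k x (emp R pop p2) (emp R pop p3) in
  let dw := dwstar k x pop in
  let A1 := 0 <= (n2%:R - n1%:R) * d12 + n3%:R * (d13 - d23) in
  let A2 := 0 <= (n3%:R - n1%:R) * d13 + n2%:R * (d12 - d23) in
  let A3 := 0 <= n1%:R * (n2 + n3 - 1)%N%:R * (d13 - d12)
                 + (n3%:R - n2%:R) * (n1 + 1)%N%:R * d23 in
  let D := [set: I] in
  (* (a), first part: an observation of population 1 is a maximizer at
     iteration 1 iff (A1) and (A2) *)
  ((exists2 c, c \in popset pop p1 &
      forall c', dw [set c'] (D :\ c') <= dw [set c] (D :\ c))
     <-> A1 /\ A2)
  /\
  (* (a), second part *)
  (A1 -> A2 -> forall C1 C2 : nat -> {set I}, BS_run k x pop D C1 C2 ->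
     transferred_from pop C1 1 p1 ->
     (forall r, (1 <= r <= n1)%N -> transferred_from pop C1 r p1) /\
     (forall r, (1 <= r < n1)%N -> dw (C1 r) (C2 r) < dw (C1 r.+1) (C2 r.+1)))
  /\
  (* (b), first part *)
  (A1 -> A2 -> forall C1 C2 : nat -> {set I}, BS_run k x pop D C1 C2 ->
     transferred_from pop C1 1 p1 ->
     ((exists2 c, c \in C2 n1 :&: popset pop p2 &
         forall c', c' \in C2 n1 ->
           dw (c' |: C1 n1) (C2 n1 :\ c') <= dw (c |: C1 n1) (C2 n1 :\ c))
      <-> A3))
  /\
  (* (b), second part *)
  (A1 -> A2 -> A3 -> forall C1 C2 : nat -> {set I}, BS_run k x pop D C1 C2 ->
     transferred_from pop C1 1 p1 -> transferred_from pop C1 n1.+1 p2 ->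
     (forall r, (n1 < r <= n1 + n2)%N -> transferred_from pop C1 r p2) /\
     (forall r, (n1 < r < n1 + n2)%N ->
        2 * dw (C1 r) (C2 r) <= dw (C1 r.-1) (C2 r.-1) + dw (C1 r.+1) (C2 r.+1)))
  /\
  (* (c) *)
  (A1 -> A2 -> A3 -> forall C1 C2 : nat -> {set I}, BS_run k x pop D C1 C2 ->
     transferred_from pop C1 1 p1 -> transferred_from pop C1 n1.+1 p2 ->
     (forall r, (n1 + n2 <= r)%N -> (r < n - 1)%N ->
        dw (C1 r.+1) (C2 r.+1) < dw (C1 r) (C2 r))).
Proof.
move=> [ks kp kq] np hd n1 n2 n3 n d12 d13 d23 dw A1 A2 A3 D.
have eA3 : A3 <-> 0 <= A3N R X k I x pop.
  rewrite /A3 natrB ?natrD //; last by rewrite addn_gt0 np.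
have hN : #|I| = n by rewrite /n; apply: cardI.
split.
  have P1 := partA1 R X k I x pop ks np.
  rewrite /dw /D; split => [/P1 [h1 h2] | [h1 h2]]; first by split.
  by apply/P1; split.
split.
  move=> hA1 hA2 C1 C2 hrun t1; split => r hr.
    exact: (partA R X k I x pop ks np kq hd C1 C2 hrun hA1 hA2 t1 r hr).2.
  exact: (partA_mono R X k I x pop ks np kp kq hd C1 C2 hrun hA1 hA2 t1 r hr).
split.
  move=> hA1 hA2 C1 C2 hrun t1.
  exact: (iff_trans (partB1 R X k I x pop ks np kq hd C1 C2 hrun hA1 hA2 t1) (iff_sym eA3)).
split.
  move=> hA1 hA2 /eA3 hA3 C1 C2 hrun t1 t2; split => r hr.
    have hs : (r - n1 <= n2)%N by rewrite /n1 /n2; lia.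
    have := (partB R X k I x pop ks np kq hd C1 C2 hrun hA1 hA2 t1 hA3 t2 (r - n1) hs).2.
    rewrite subnKC; last by rewrite /n1; lia.
    apply; rewrite /n1; lia.
  exact: (partB_conv R X k I x pop ks np kq hd C1 C2 hrun hA1 hA2 t1 hA3 t2 r hr).
move=> hA1 hA2 /eA3 hA3 C1 C2 hrun t1 t2 r h1 h2.
apply: (partC_dec R X k I x pop ks np kp kq hd C1 C2 hrun hA1 hA2 t1 hA3 t2 r h1).
by rewrite hN.
Qed.
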